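(* Let $m$ be a nonnegative integer and $r>0$. Then $$\sum_{n=0}^{\infty}\frac{1}{(n+m+1)(2n+2m+2r+1)}\frac{\binom{2n}{n}}{\binom{2n+2m+2r}{n+m+r}}=\frac{1}{2(2m+1)\binom{2m}{m}}\cdot\frac{1}{(2r-1)\binom{2r-2}{r-1}}-\frac{1}{4^{m+r}}\sum_{k=0}^m\binom{m}{k}\frac{(-1)^k}{2k+1}\frac{k!}{(r)_{k+1}}.$$
   Context: $(x)_n=x(x+1)\cdots(x+n-1)$ denotes the Pochhammer symbol, $(x)_0=1$. For non-integer arguments, binomial coefficients are understood via the Gamma function: $\binom{a}{b}=\frac{\Gamma(a+1)}{\Gamma(b+1)\Gamma(a-b+1)}$. *)

(* Defs.v *)
From Stdlib Require Import Reals Factorial.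
From Coquelicot Require Import Coquelicot.
Open Scope R_scope.

Definition Gamma (x : R) : R :=
  RInt_gen (fun t => Rpower t (x - 1) * exp (- t)) (at_right 0) (Rbar_locally p_infty).

Definition binomG (a b : R) : R := Gamma (a + 1) / (Gamma (b + 1) * Gamma (a - b + 1)).

Definition binom (n k : nat) : R := Binomial.C n k.

Fixpoint poch (x : R) (n : nat) : R :=
  match n with
  | O => 1
  | S n' => poch x n' * (x + INR n')
  end.

(* Main.v *)
Require Import Defs.
From Stdlib Require Import Reals Factorial Lra Lia.
From Coquelicot Require Import Coquelicot.
Open Scope R_scope.


Definition gf (x t : R) : R := Rpower t (x - 1) * exp (- t).
Definition Iab (x a b : R) : R := RInt (gf x) a b.

Lemma gf_pos x t : 0 < t -> 0 < gf x t.
Proof. intros. unfold gf, Rpower. apply Rmult_lt_0_compat; apply exp_pos. Qed.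

Lemma gf_ex_derive x t : 0 < t -> ex_derive (gf x) t.
Proof. intros Ht. unfold gf, Rpower. auto_derive. exact Ht. Qed.

Lemma gf_cont x t : 0 < t -> continuous (gf x) t.
Proof. intros Ht. apply (ex_derive_continuous (gf x)), gf_ex_derive, Ht. Qed.

Lemma ex_I x a b : 0 < a -> 0 < b -> ex_RInt (gf x) a b.
Proof.
  intros Ha Hb. apply (@ex_RInt_continuous R_CompleteNormedModule). intros z Hz. apply gf_cont.
  destruct Hz as [Hz _]. unfold Rmin in Hz. destruct (Rle_dec a b); lra.
Qed.

Lemma I_nonneg x a b : 0 < a -> a <= b -> 0 <= Iab x a b.
Proof.
  intros Ha Hab. apply RInt_ge_0; auto. apply ex_I; lra.
  intros t Ht. left. apply gf_pos. lra.
Qed.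

Lemma I_chasles x a b c : 0 < a -> 0 < b -> 0 < c -> Iab x a b + Iab x b c = Iab x a c.
Proof. intros. unfold Iab. apply (@RInt_Chasles R_CompleteNormedModule (gf x)); apply ex_I; auto. Qed.

Lemma I_swap x a b : 0 < a -> 0 < b -> Iab x b a = - Iab x a b.
Proof. intros. unfold Iab. rewrite <- (@opp_RInt_swap R_CompleteNormedModule (gf x) a b); auto. apply ex_I; auto. Qed.

Lemma exp_pow_nat y n : exp y ^ n = exp (INR n * y).
Proof.
  induction n. simpl. rewrite Rmult_0_l, exp_0. reflexivity.
  rewrite S_INR. simpl. rewrite IHn. rewrite <- exp_plus. f_equal. ring.
Qed.

Lemma Rpower_exp_ln t y : Rpower t y = exp (y * ln t).
Proof. reflexivity. Qed.

Lemma H0_derive x t : 0 < x -> 0 < t -> is_derive (fun u => Rpower u x / x) t (Rpower t (x - 1)).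
Proof.
  intros Hx Ht. unfold Rpower. auto_derive. exact Ht.
  replace ((x - 1) * ln t) with (x * ln t + - ln t) by ring.
  rewrite exp_plus, exp_Ropp, exp_ln by exact Ht. field. split; lra.
Qed.

Lemma Rpower_pos t y : 0 < Rpower t y.
Proof. apply exp_pos. Qed.

Lemma Rpower_cont_pt y t : 0 < t -> continuous (fun u => Rpower u y) t.
Proof. intros Ht. apply (ex_derive_continuous (fun u => Rpower u y)). unfold Rpower. auto_derive. exact Ht. Qed.

Lemma I_bound0 x p q : 0 < x -> 0 < p -> p <= q -> q <= 1 -> Iab x p q <= Rpower q x / x.
Proof.
  intros Hx Hp Hpq Hq1.
  assert (Hint : is_RInt (fun u => Rpower u (x - 1)) p q (minus (Rpower q x / x) (Rpower p x / x))).
  { apply (@is_RInt_derive R_CompleteNormedModule (fun u => Rpower u x / x)).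
    - intros t Ht. apply H0_derive; auto. unfold Rmin in Ht. destruct (Rle_dec p q); lra.
    - intros t Ht. apply Rpower_cont_pt. unfold Rmin in Ht. destruct (Rle_dec p q); lra. }
  apply Rle_trans with (RInt (fun u => Rpower u (x - 1)) p q).
  - apply RInt_le; auto. apply ex_I; lra. eexists; exact Hint.
    intros t Ht. unfold gf. rewrite <- (Rmult_1_r (Rpower t (x-1))) at 2.
    apply Rmult_le_compat_l. left; apply Rpower_pos.
    rewrite <- exp_0. apply exp_le_3 || (apply Rlt_le, exp_increasing; lra).
  - rewrite (is_RInt_unique _ _ _ _ Hint). unfold minus, plus, opp; simpl.
    assert (0 < Rpower p x / x) by (apply Rdiv_lt_0_compat; [apply Rpower_pos| lra]). lra.
Qed.


Lemma pow_le_exp k t : (0 < k)%nat -> 0 <= t -> t ^ k <= INR k ^ k * exp t.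
Proof.
  intros Hk Ht.
  assert (HK : 0 < INR k) by (apply lt_0_INR; lia).
  replace t with (INR k * (t / INR k)) at 1 by (field; lra).
  rewrite Rpow_mult_distr.
  apply Rmult_le_compat_l. apply pow_le; lra.
  replace (exp t) with (exp (t / INR k) ^ k).
  2:{ rewrite exp_pow_nat. f_equal. field. lra. }
  apply pow_incr. split. apply Rdiv_le_0_compat; lra.
  pose proof (exp_ineq1_le (t / INR k)). lra.
Qed.

Lemma gf_bound_inf x : 0 < x -> exists C, 0 < C /\ forall t, 1 <= t -> gf x t <= C / t ^ 2.
Proof.
  intros Hx. destruct (INR_unbounded (x + 1)) as [k Hk].
  assert (Hk0 : (0 < k)%nat). { destruct k. simpl in Hk. lra. lia. }
  exists (INR k ^ k). split. apply pow_lt. apply lt_0_INR; lia.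
  intros t Ht.
  assert (Ht2 : 0 < t ^ 2) by (apply pow_lt; lra).
  apply Rmult_le_reg_r with (t ^ 2). exact Ht2.
  unfold Rdiv. rewrite Rmult_assoc, Rinv_l, Rmult_1_r by lra.
  unfold gf.
  replace (Rpower t (x - 1) * exp (- t) * t ^ 2) with (Rpower t (x + 1) * exp (- t)).
  2:{ rewrite <- (Rpower_pow 2 t) by lra.
      replace (Rpower t (x - 1) * exp (- t) * Rpower t (INR 2)) with (Rpower t (x - 1) * Rpower t (INR 2) * exp (- t)) by ring.
      rewrite <- Rpower_plus. simpl INR. f_equal. f_equal. ring. }
  apply Rle_trans with (t ^ k * exp (- t)).
  - apply Rmult_le_compat_r. left; apply exp_pos.
    rewrite <- (Rpower_pow k t) by lra. apply Rle_Rpower; lra.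
  - apply Rmult_le_reg_r with (exp t). apply exp_pos.
    rewrite Rmult_assoc, <- exp_plus. replace (- t + t) with 0 by ring. rewrite exp_0, Rmult_1_r.
    apply pow_le_exp; [lia|lra].
Qed.

Lemma inv_derive C t : 0 < t -> is_derive (fun u => - C / u) t (C / t ^ 2).
Proof. intros Ht. auto_derive. apply Rgt_not_eq; lra. field. apply Rgt_not_eq; lra. Qed.

Lemma I_bound_inf x C p q : 0 < x -> 0 < C -> (forall t, 1 <= t -> gf x t <= C / t ^ 2) ->
  1 <= p -> p <= q -> Iab x p q <= C / p.
Proof.
  intros Hx HC Hb Hp Hpq.
  assert (Hint : is_RInt (fun u => C / u ^ 2) p q (minus (- C / q) (- C / p))).
  { apply (@is_RInt_derive R_CompleteNormedModule (fun u => - C / u)).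
    - intros t Ht. unfold Rmin in Ht. destruct (Rle_dec p q); [|lra].
      apply inv_derive. lra.
    - intros t Ht. unfold Rmin in Ht. destruct (Rle_dec p q); [|lra].
      apply (ex_derive_continuous (fun u => C / u ^ 2)). auto_derive. apply Rgt_not_eq. apply Rmult_lt_0_compat; [lra|]. lra. }
  apply Rle_trans with (RInt (fun u => C / u ^ 2) p q).
  - apply RInt_le; auto. apply ex_I; lra. eexists; exact Hint.
    intros t Ht. apply Hb. lra.
  - rewrite (is_RInt_unique _ _ _ _ Hint). unfold minus, plus, opp; simpl.
    assert (0 < C / q) by (apply Rdiv_lt_0_compat; lra).
    unfold Rdiv in *. lra.
Qed.


Lemma small_pow c x t : 0 < c -> 0 < x -> 0 < t < Rpower c (/x) -> Rpower t x < c.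
Proof.
  intros Hc Hx Ht.
  apply Rlt_le_trans with (Rpower (Rpower c (/x)) x).
  apply Rlt_Rpower_l; auto.
  rewrite Rpower_mult. replace (/ x * x) with 1 by (field; lra). rewrite Rpower_1; lra.
Qed.

Lemma I_small0 x eps : 0 < x -> 0 < eps ->
  exists d, 0 < d /\ d <= 1 /\ forall p q, 0 < p < d -> 0 < q < d -> Rabs (Iab x p q) < eps.
Proof.
  intros Hx He.
  exists (Rmin 1 (Rpower (x * eps) (/ x))).
  assert (Hd : 0 < Rpower (x * eps) (/ x)) by apply Rpower_pos.
  split. apply Rmin_pos; lra. split. apply Rmin_l.
  assert (Hk : forall p q, 0 < p <= q -> q < Rmin 1 (Rpower (x * eps) (/ x)) -> Rabs (Iab x p q) < eps).
  { intros p q Hpq Hq.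
    pose proof (Rmin_l 1 (Rpower (x * eps) (/ x))). pose proof (Rmin_r 1 (Rpower (x * eps) (/ x))).
    rewrite Rabs_right by (apply Rle_ge, I_nonneg; lra).
    apply Rle_lt_trans with (Rpower q x / x). apply I_bound0; lra.
    apply Rmult_lt_reg_r with x; auto. unfold Rdiv. rewrite Rmult_assoc, Rinv_l, Rmult_1_r by lra.
    rewrite Rmult_comm. apply small_pow. apply Rmult_lt_0_compat; lra. auto. lra. }
  intros p q Hp Hq. destruct (Rle_dec p q).
  apply Hk; lra.
  rewrite I_swap by lra. rewrite Rabs_Ropp. apply Hk; lra.
Qed.

Lemma I_small_inf x eps : 0 < x -> 0 < eps ->
  exists M, 1 <= M /\ forall p q, M < p -> M < q -> Rabs (Iab x p q) < eps.
Proof.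
  intros Hx He. destruct (gf_bound_inf x Hx) as [C [HC Hb]].
  exists (Rmax 1 (C / eps)). split. apply Rmax_l.
  pose proof (Rmax_l 1 (C / eps)). pose proof (Rmax_r 1 (C / eps)).
  assert (Hk : forall p q, Rmax 1 (C / eps) < p <= q -> Rabs (Iab x p q) < eps).
  { intros p q Hpq.
    rewrite Rabs_right by (apply Rle_ge, I_nonneg; lra).
    apply Rle_lt_trans with (C / p). apply I_bound_inf; auto; lra.
    apply Rmult_lt_reg_r with p. lra. unfold Rdiv. rewrite Rmult_assoc, Rinv_l, Rmult_1_r by lra.
    assert (Hce : C / eps * eps = C) by (field; lra).
    assert (C / eps < p) by lra. nra. }
  intros p q Hp Hq. destruct (Rle_dec p q).
  apply Hk; lra.
  rewrite I_swap by lra. rewrite Rabs_Ropp. apply Hk; lra.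
Qed.

Definition FP := filter_prod (at_right 0) (Rbar_locally p_infty).

Lemma FP_proper : ProperFilter FP.
Proof. apply filter_prod_proper. Qed.

Lemma FP_pos : FP (fun ab => 0 < fst ab /\ 0 < snd ab).
Proof.
  apply Filter_prod with (fun a => 0 < a) (fun b => 0 < b).
  - unfold at_right, within, locally. exists (mkposreal 1 Rlt_0_1). intros; auto.
  - exists 0. intros; auto.
  - intros; simpl; auto.
Qed.

Lemma I_cauchy x : 0 < x -> exists l, filterlim (fun ab => Iab x (fst ab) (snd ab)) FP (locally l).
Proof.
  intros Hx.
  apply (@filterlim_locally_cauchy _ R_CompleteSpace FP FP_proper (fun ab => Iab x (fst ab) (snd ab))).
  intros eps.
  assert (He2 : 0 < eps / 2) by (pose proof (cond_pos eps); lra).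
  destruct (I_small0 x (eps/2) Hx He2) as [d [Hd [Hd1 H0]]].
  destruct (I_small_inf x (eps/2) Hx He2) as [M [HM Hinf]].
  exists (fun ab => 0 < fst ab < d /\ M < snd ab). split.
  - apply Filter_prod with (fun a => 0 < a < d) (fun b => M < b).
    + unfold at_right, within, locally. exists (mkposreal d Hd). intros y Hy Hy0.
      unfold ball in Hy; simpl in Hy. unfold AbsRing_ball, abs, minus, plus, opp in Hy; simpl in Hy.
      rewrite Ropp_0, Rplus_0_r in Hy. apply Rabs_def2 in Hy. lra.
    + exists M. auto.
    + intros; simpl; auto.
  - intros [a b] [a' b'] [Ha Hb] [Ha' Hb']. simpl in *.
    unfold ball; simpl. unfold AbsRing_ball, abs, minus, plus, opp; simpl.
    rewrite <- (I_chasles x a' a b') by lra. rewrite <- (I_chasles x a b b') by lra.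
    replace (Iab x a' a + (Iab x a b + Iab x b b') + - Iab x a b) with (Iab x a' a + Iab x b b') by ring.
    eapply Rle_lt_trans. apply Rabs_triang.
    pose proof (H0 a' a (conj (proj1 Ha') (proj2 Ha')) (conj (proj1 Ha) (proj2 Ha))).
    pose proof (Hinf b b' Hb Hb'). lra.
Qed.

Lemma Gamma_lim x : 0 < x -> filterlim (fun ab => Iab x (fst ab) (snd ab)) FP (locally (Gamma x)).
Proof.
  intros Hx. destruct (I_cauchy x Hx) as [l Hl].
  assert (HG : is_RInt_gen (gf x) (at_right 0) (Rbar_locally p_infty) l).
  { unfold is_RInt_gen.
    apply (filterlimi_lim_ext_loc (fun ab => Iab x (fst ab) (snd ab))).
    - eapply filter_imp; [| apply FP_pos]. intros [a b] [Ha Hb]; simpl in *.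
      apply (RInt_correct (gf x)). apply ex_I; auto.
    - exact Hl. }
  unfold Gamma. replace (RInt_gen (fun t : R => Rpower t (x - 1) * exp (- t)) (at_right 0) (Rbar_locally p_infty)) with l.
  exact Hl. symmetry. apply (is_RInt_gen_unique (gf x) l HG).
Qed.


Definition sa (n : nat) : R := / (INR n + 1).
Definition sb (n : nat) : R := INR n + 2.

Lemma sa_pos n : 0 < sa n.
Proof. unfold sa. apply Rinv_0_lt_compat. pose proof (pos_INR n). lra. Qed.
Lemma sa_le1 n : sa n <= 1.
Proof. unfold sa. pose proof (pos_INR n). rewrite <- Rinv_1. apply Rinv_le_contravar; lra. Qed.
Lemma sb_ge2 n : 2 <= sb n.
Proof. unfold sb. pose proof (pos_INR n). lra. Qed.

Lemma sa_small eps : 0 < eps -> exists N, forall n, (N <= n)%nat -> sa n < eps.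
Proof.
  intros He. destruct (archimed_cor1 eps He) as [N [HN HN0]].
  exists N. intros n Hn. unfold sa. apply Rle_lt_trans with (/ INR N); auto.
  apply Rinv_le_contravar. apply lt_0_INR; lia. apply le_INR in Hn. lra.
Qed.

Lemma sb_large M : exists N, forall n, (N <= n)%nat -> M < sb n.
Proof.
  destruct (INR_unbounded M) as [N HN]. exists N. intros n Hn. unfold sb.
  apply le_INR in Hn. lra.
Qed.

Lemma seq_FP : filterlim (fun n => (sa n, sb n)) eventually FP.
Proof.
  apply filterlim_pair.
  - intros P [eps HP]. destruct (sa_small eps (cond_pos eps)) as [N HN].
    exists N. intros n Hn. apply HP. unfold ball; simpl. unfold AbsRing_ball, abs, minus, plus, opp; simpl.
    rewrite Ropp_0, Rplus_0_r. rewrite Rabs_right. apply HN; auto. left; apply sa_pos. apply sa_pos.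
  - intros P [M HM]. destruct (sb_large M) as [N HN]. exists N. intros n Hn. apply HM, HN, Hn.
Qed.

Lemma Gamma_seq x : 0 < x -> is_lim_seq (fun n => Iab x (sa n) (sb n)) (Gamma x).
Proof.
  intros Hx. unfold is_lim_seq.
  apply (filterlim_comp _ _ _ (fun n => (sa n, sb n)) (fun ab => Iab x (fst ab) (snd ab)) eventually FP).
  apply seq_FP. apply Gamma_lim, Hx.
Qed.

Lemma exp_le_mono a b : a <= b -> exp a <= exp b.
Proof. intros H. destruct (Req_dec a b) as [E|E]. subst; lra. left; apply exp_increasing; lra. Qed.

Lemma I12_pos x : 0 < Iab x 1 2.
Proof.
  set (c := exp (- (Rabs (x - 1) * ln 2)) * exp (-2)).
  assert (Hc : 0 < c) by (unfold c; apply Rmult_lt_0_compat; apply exp_pos).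
  apply Rlt_le_trans with (RInt (fun _ => c) 1 2).
  - rewrite RInt_const. change (scal (2-1) c) with ((2-1)*c). lra.
  - apply RInt_le. lra. apply ex_RInt_const. apply ex_I; lra.
    intros t Ht. unfold gf, c, Rpower. apply Rmult_le_compat. left; apply exp_pos. left; apply exp_pos.
    + apply exp_le_mono.
      assert (0 <= ln t) by (rewrite <- ln_1; apply ln_le; lra).
      assert (ln t <= ln 2) by (apply ln_le; lra).
      destruct (Rle_dec 0 (x - 1)).
      * rewrite Rabs_right by lra. nra.
      * rewrite Rabs_left by lra. nra.
    + apply exp_le_mono; lra.
Qed.

Lemma Gamma_pos x : 0 < x -> 0 < Gamma x.
Proof.
  intros Hx. apply Rlt_le_trans with (Iab x 1 2). apply I12_pos.
  assert (H := is_lim_seq_le (fun _ => Iab x 1 2) (fun n => Iab x (sa n) (sb n)) (Iab x 1 2) (Gamma x)).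
  simpl in H. apply H. 2: apply is_lim_seq_const. 2: apply Gamma_seq, Hx.
  intros n. pose proof (sa_pos n). pose proof (sa_le1 n). pose proof (sb_ge2 n).
  rewrite <- (I_chasles x (sa n) 1 (sb n)) by lra.
  rewrite <- (I_chasles x 1 2 (sb n)) by lra.
  pose proof (I_nonneg x (sa n) 1). pose proof (I_nonneg x 2 (sb n)). lra.
Qed.


Lemma lim_uniq u (l1 l2 : R) : is_lim_seq u l1 -> is_lim_seq u l2 -> l1 = l2.
Proof.
  intros H1 H2. apply is_lim_seq_unique in H1. apply is_lim_seq_unique in H2.
  rewrite H1 in H2. injection H2; auto.
Qed.

Lemma lim_squeeze0 u v : (forall n, 0 <= u n <= v n) -> is_lim_seq v 0 -> is_lim_seq u 0.
Proof.
  intros H Hv. apply (is_lim_seq_le_le (fun _ => 0) u v). auto. apply is_lim_seq_const. auto.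
Qed.

Definition phi (x t : R) : R := Rpower t x * exp (- t).

Lemma phi_derive x t : 0 < t -> is_derive (fun u => - phi x u) t (gf (x+1) t - x * gf x t).
Proof.
  intros Ht. unfold phi, gf, Rpower. auto_derive. exact Ht.
  replace (x + 1 - 1) with x by ring.
  replace ((x - 1) * ln t) with (x * ln t + - ln t) by ring.
  rewrite exp_plus, (exp_Ropp (ln t)), exp_ln by exact Ht. field. lra.
Qed.

Lemma I_succ x a b : 0 < a -> 0 < b -> Iab (x + 1) a b = phi x a - phi x b + x * Iab x a b.
Proof.
  intros Ha Hb.
  assert (H1 : is_RInt (fun u => gf (x+1) u - x * gf x u) a b (minus (- phi x b) (- phi x a))).
  { apply (@is_RInt_derive R_CompleteNormedModule (fun u => - phi x u)).
    - intros t Ht. apply phi_derive. unfold Rmin in Ht. destruct (Rle_dec a b); lra.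
    - intros t Ht. assert (0 < t) by (unfold Rmin in Ht; destruct (Rle_dec a b); lra).
      apply (ex_derive_continuous (fun u => gf (x+1) u - x * gf x u)).
      unfold gf, Rpower. auto_derive. lra. }
  assert (H2 : is_RInt (fun u => x * gf x u) a b (x * Iab x a b)).
  { apply (is_RInt_scal (gf x) a b x (Iab x a b)). apply (RInt_correct (gf x)). apply ex_I; auto. }
  pose proof (is_RInt_plus _ _ a b _ _ H1 H2) as H3.
  replace (phi x a - phi x b + x * Iab x a b) with (plus (minus (- phi x b) (- phi x a)) (x * Iab x a b))
    by (unfold minus, plus, opp; simpl; ring).
  unfold Iab at 1. apply is_RInt_unique.
  eapply is_RInt_ext; [| exact H3]. intros t _. unfold plus; simpl. ring.
Qed.


Lemma phi_sa_lim x : 0 < x -> is_lim_seq (fun n => phi x (sa n)) 0.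
Proof.
  intros Hx. apply lim_squeeze0 with (fun n => Rpower (sa n) x).
  - intros n. pose proof (sa_pos n). unfold phi. split.
    left; apply Rmult_lt_0_compat; [apply Rpower_pos| apply exp_pos].
    rewrite <- (Rmult_1_r (Rpower (sa n) x)) at 2. apply Rmult_le_compat_l. left; apply Rpower_pos.
    rewrite <- exp_0. apply exp_le_mono. lra.
  - apply is_lim_seq_spec. intros eps.
    destruct (sa_small (Rpower eps (/ x)) (Rpower_pos _ _)) as [N HN].
    exists N. intros n Hn. rewrite Rminus_0_r, Rabs_right by (left; apply Rpower_pos).
    apply small_pow; auto. apply cond_pos. split. apply sa_pos. apply HN, Hn.
Qed.

Lemma phi_sb_lim x : 0 < x -> is_lim_seq (fun n => phi x (sb n)) 0.
Proof.
  intros Hx. destruct (gf_bound_inf (x + 1)) as [C [HC Hb]]. lra.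
  apply lim_squeeze0 with (fun n => C / sb n).
  - intros n. pose proof (sb_ge2 n). split.
    left; unfold phi; apply Rmult_lt_0_compat; [apply Rpower_pos| apply exp_pos].
    replace (phi x (sb n)) with (gf (x + 1) (sb n)) by (unfold phi, gf; f_equal; f_equal; ring).
    apply Rle_trans with (C / sb n ^ 2). apply Hb; lra.
    unfold Rdiv. apply Rmult_le_compat_l. lra. apply Rinv_le_contravar. lra. simpl. nra.
  - apply is_lim_seq_spec. intros eps.
    destruct (sb_large (C / eps)) as [N HN].
    exists N. intros n Hn. pose proof (sb_ge2 n). pose proof (HN n Hn). pose proof (cond_pos eps).
    rewrite Rminus_0_r, Rabs_right by (left; apply Rdiv_lt_0_compat; lra).
    apply Rmult_lt_reg_r with (sb n). lra. unfold Rdiv. rewrite Rmult_assoc, Rinv_l, Rmult_1_r by lra.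
    assert (Hce : C / eps * eps = C) by (field; lra). nra.
Qed.

Lemma Gamma_succ x : 0 < x -> Gamma (x + 1) = x * Gamma x.
Proof.
  intros Hx. apply (lim_uniq (fun n => Iab (x + 1) (sa n) (sb n))).
  apply Gamma_seq; lra.
  apply is_lim_seq_ext with (fun n => phi x (sa n) - phi x (sb n) + x * Iab x (sa n) (sb n)).
  intros n. rewrite I_succ; auto. apply sa_pos. pose proof (sb_ge2 n); lra.
  replace (x * Gamma x) with (0 - 0 + x * Gamma x) by ring.
  apply is_lim_seq_plus'. apply is_lim_seq_minus'. apply phi_sa_lim; auto. apply phi_sb_lim; auto.
  apply (is_lim_seq_scal_l _ x (Gamma x)). apply Gamma_seq; auto.
Qed.

Lemma wamgm l u v : 0 <= l <= 1 -> 0 < u -> 0 < v ->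
  exp (l * ln u + (1 - l) * ln v) <= l * u + (1 - l) * v.
Proof.
  intros Hl Hu Hv. set (w := l * u + (1 - l) * v).
  assert (Hw : 0 < w). { unfold w. destruct (Req_dec l 0). subst. lra. nra. }
  assert (H1 : ln (u / w) <= u / w - 1) by (pose proof (exp_ineq1_le (ln (u / w))); rewrite exp_ln in H; [lra| apply Rdiv_lt_0_compat; lra]).
  assert (H2 : ln (v / w) <= v / w - 1) by (pose proof (exp_ineq1_le (ln (v / w))); rewrite exp_ln in H; [lra| apply Rdiv_lt_0_compat; lra]).
  rewrite ln_div in H1, H2 by lra.
  assert (l * (u / w - 1) + (1 - l) * (v / w - 1) = 0).
  { unfold w. field. fold w. lra. }
  rewrite <- (exp_ln w) by lra. apply exp_le_mono. nra.
Qed.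


Lemma ln_gf x t : 0 < t -> ln (gf x t) = (x - 1) * ln t - t.
Proof. intros Ht. unfold gf, Rpower. rewrite ln_mult by apply exp_pos. rewrite !ln_exp. ring. Qed.

Lemma is_RInt_lin2 x y K al be a b : 0 < a -> 0 < b ->
  is_RInt (fun t => K * (al * gf x t + be * gf y t)) a b (K * (al * Iab x a b + be * Iab y a b)).
Proof.
  intros Ha Hb.
  assert (H1 : is_RInt (gf x) a b (Iab x a b)) by (apply (RInt_correct (gf x)); apply ex_I; auto).
  assert (H2 : is_RInt (gf y) a b (Iab y a b)) by (apply (RInt_correct (gf y)); apply ex_I; auto).
  apply (is_RInt_scal _ a b al) in H1. apply (is_RInt_scal _ a b be) in H2.
  pose proof (is_RInt_plus _ _ a b _ _ H1 H2) as H3.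
  apply (is_RInt_scal _ a b K) in H3. exact H3.
Qed.

Lemma Gamma_holder x y l : 0 < x -> 0 < y -> 0 <= l <= 1 ->
  Gamma (l * x + (1 - l) * y) <= exp (l * ln (Gamma x) + (1 - l) * ln (Gamma y)).
Proof.
  intros Hx Hy Hl. set (z := l * x + (1 - l) * y).
  assert (Hz : 0 < z). { unfold z. destruct (Req_dec l 0). subst. lra. nra. }
  pose proof (Gamma_pos x Hx) as HA. pose proof (Gamma_pos y Hy) as HB.
  set (A := Gamma x) in *. set (B := Gamma y) in *.
  set (K := exp (l * ln A + (1 - l) * ln B)).
  assert (Hpt : forall t, 0 < t -> gf z t <= K * (l / A * gf x t + (1 - l) / B * gf y t)).
  { intros t Ht.
    assert (Hu : 0 < gf x t / A) by (apply Rdiv_lt_0_compat; auto; apply gf_pos; auto).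
    assert (Hv : 0 < gf y t / B) by (apply Rdiv_lt_0_compat; auto; apply gf_pos; auto).
    assert (E : gf z t = K * exp (l * ln (gf x t / A) + (1 - l) * ln (gf y t / B))).
    { unfold K. rewrite <- exp_plus. rewrite !ln_div by (auto; apply gf_pos; auto).
      rewrite !ln_gf by auto. unfold gf, Rpower. rewrite <- exp_plus. f_equal. unfold z. ring. }
    rewrite E. apply Rmult_le_compat_l. left; apply exp_pos.
    replace (l / A * gf x t + (1 - l) / B * gf y t) with (l * (gf x t / A) + (1 - l) * (gf y t / B)) by (field; lra).
    apply wamgm; auto. }
  fold K.
  assert (H := is_lim_seq_le (fun n => Iab z (sa n) (sb n))
     (fun n => K * (l / A * Iab x (sa n) (sb n) + (1 - l) / B * Iab y (sa n) (sb n))) (Gamma z) K).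
  simpl in H. apply H.
  - intros n. pose proof (sa_pos n). pose proof (sa_le1 n). pose proof (sb_ge2 n).
    rewrite <- (is_RInt_unique _ _ _ _ (is_RInt_lin2 x y K (l / A) ((1 - l) / B) (sa n) (sb n) H0 ltac:(lra))).
    apply RInt_le. lra. apply ex_I; lra. eexists; apply is_RInt_lin2; lra.
    intros t Ht. apply Hpt. lra.
  - apply Gamma_seq; auto.
  - assert (Hlim : is_lim_seq (fun n => K * (l / A * Iab x (sa n) (sb n) + (1 - l) / B * Iab y (sa n) (sb n)))
                     (K * (l / A * A + (1 - l) / B * B))).
    { apply is_lim_seq_mult'. apply is_lim_seq_const.
      apply is_lim_seq_plus'; apply is_lim_seq_mult'; try apply is_lim_seq_const; apply Gamma_seq; auto. }
    replace (K * (l / A * A + (1 - l) / B * B)) with K in Hlim by (field; lra). exact Hlim.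
Qed.


Lemma lim_minus u v (a b c : R) : is_lim_seq u a -> is_lim_seq v b -> c = a - b ->
  is_lim_seq (fun n => u n - v n) c.
Proof. intros Hu Hv ->. apply is_lim_seq_minus'; auto. Qed.

Lemma Gamma_1 : Gamma 1 = 1.
Proof.
  apply (lim_uniq (fun n => Iab 1 (sa n) (sb n))). apply Gamma_seq; lra.
  assert (HI : forall a b, 0 < a -> 0 < b -> Iab 1 a b = exp (- a) - exp (- b)).
  { intros a b Ha Hb. unfold Iab. apply is_RInt_unique.
    replace (exp (- a) - exp (- b)) with (minus (- exp (- b)) (- exp (- a))) by (unfold minus, plus, opp; simpl; ring).
    apply (@is_RInt_derive R_CompleteNormedModule (fun u => - exp (- u))).
    - intros t Ht. assert (0 < t) by (unfold Rmin in Ht; destruct (Rle_dec a b); lra).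
      auto_derive. auto. unfold gf, Rpower. replace (1 - 1) with 0 by ring. rewrite Rmult_0_l, exp_0. ring.
    - intros t Ht. assert (0 < t) by (unfold Rmin in Ht; destruct (Rle_dec a b); lra).
      apply gf_cont; auto. }
  apply is_lim_seq_ext with (fun n => exp (- sa n) - exp (- sb n)).
  intros n. rewrite HI; auto. apply sa_pos. pose proof (sb_ge2 n); lra.
  apply lim_minus with 1 0; [| |ring].
  - apply is_lim_seq_le_le with (fun n => 1 - sa n) (fun _ => 1).
    intros n. split. pose proof (exp_ineq1_le (- sa n)). lra. rewrite <- exp_0. apply exp_le_mono. pose proof (sa_pos n); lra.
    apply lim_minus with 1 0; [apply is_lim_seq_const| |ring].
    apply lim_squeeze0 with (fun n => sa n). intros n; pose proof (sa_pos n); lra.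
    apply is_lim_seq_spec. intros eps. destruct (sa_small eps (cond_pos eps)) as [N HN]. exists N. intros n Hn.
    rewrite Rminus_0_r, Rabs_right by (left; apply sa_pos). auto.
    apply is_lim_seq_const.
  - apply lim_squeeze0 with (fun n => / sb n).
    intros n. pose proof (sb_ge2 n). split. left; apply exp_pos.
    rewrite <- (Rinv_inv (exp (- sb n))). apply Rinv_le_contravar. lra.
    rewrite exp_Ropp, Rinv_inv. pose proof (exp_ineq1_le (sb n)). lra.
    apply is_lim_seq_spec. intros eps. destruct (sb_large (/ eps)) as [N HN]. exists N. intros n Hn.
    pose proof (HN n Hn). pose proof (sb_ge2 n). pose proof (cond_pos eps).
    rewrite Rminus_0_r, Rabs_right by (left; apply Rinv_0_lt_compat; lra).
    rewrite <- (Rinv_inv eps). apply Rinv_lt_contravar. apply Rmult_lt_0_compat. apply Rinv_0_lt_compat; lra. lra. lra.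
Qed.

Lemma poch_S x n : poch x (S n) = poch x n * (x + INR n).
Proof. reflexivity. Qed.

Lemma poch_pos x n : 0 < x -> 0 < poch x n.
Proof. intros Hx. induction n. simpl; lra. rewrite poch_S. apply Rmult_lt_0_compat; auto. pose proof (pos_INR n); lra. Qed.

Lemma Gamma_shift x k : 0 < x -> Gamma (x + INR k) = poch x k * Gamma x.
Proof.
  intros Hx. induction k. simpl. rewrite Rplus_0_r; ring.
  rewrite S_INR, poch_S. replace (x + (INR k + 1)) with ((x + INR k) + 1) by ring.
  rewrite Gamma_succ by (pose proof (pos_INR k); lra). rewrite IHk. ring.
Qed.

Lemma poch_1_fact n : poch 1 n = INR (fact n).
Proof.
  induction n. simpl; auto. rewrite poch_S, IHn. rewrite fact_simpl, mult_INR, S_INR. ring.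
Qed.

Lemma Gamma_nat n : Gamma (INR n + 1) = INR (fact n).
Proof. rewrite Rplus_comm, Gamma_shift, poch_1_fact, Gamma_1 by lra. ring. Qed.


Definition rho s x := Gamma (x + s) / (Gamma x * Rpower x s).

Lemma Gamma_upper a x : 0 <= a <= 1 -> 0 < x -> Gamma (x + a) <= Gamma x * Rpower x a.
Proof.
  intros Ha Hx.
  pose proof (Gamma_holder x (x + 1) (1 - a) Hx ltac:(lra) ltac:(lra)) as H.
  replace ((1 - a) * x + (1 - (1 - a)) * (x + 1)) with (x + a) in H by ring.
  rewrite Gamma_succ in H by lra.
  pose proof (Gamma_pos x Hx).
  rewrite ln_mult in H by lra.
  unfold Rpower. rewrite <- (exp_ln (Gamma x)) by lra. rewrite <- exp_plus.
  eapply Rle_trans. exact H. apply exp_le_mono. lra.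
Qed.

Lemma Gamma_lower a x : 0 <= a <= 1 -> 0 < x -> x / (x + a) * (Gamma x * Rpower x a) <= Gamma (x + a).
Proof.
  intros Ha Hx.
  pose proof (Gamma_holder (x + a) (x + a + 1) a ltac:(lra) ltac:(lra) Ha) as H.
  replace (a * (x + a) + (1 - a) * (x + a + 1)) with (x + 1) in H by ring.
  rewrite Gamma_succ in H by lra. rewrite Gamma_succ in H by lra.
  pose proof (Gamma_pos x Hx). pose proof (Gamma_pos (x + a) ltac:(lra)) as HG.
  set (G := Gamma (x + a)) in *.
  rewrite ln_mult in H by lra.
  replace (a * ln G + (1 - a) * (ln (x + a) + ln G)) with (ln G + (1 - a) * ln (x + a)) in H by ring.
  rewrite exp_plus, exp_ln in H by lra.
  (* H : x * Gamma x <= G * exp ((1 - a) * ln (x + a)) *)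
  assert (Hxa : exp ((1 - a) * ln (x + a)) = (x + a) / exp (a * ln (x + a))).
  { replace ((1 - a) * ln (x + a)) with (ln (x + a) + - (a * ln (x + a))) by ring.
    rewrite exp_plus, exp_Ropp, exp_ln by lra. field. apply Rgt_not_eq, exp_pos. }
  rewrite Hxa in H.
  assert (Hm : Rpower x a <= exp (a * ln (x + a))).
  { unfold Rpower. apply exp_le_mono. apply Rmult_le_compat_l. lra. apply ln_le; lra. }
  pose proof (exp_pos (a * ln (x + a))).
  assert (Hpow : 0 < Rpower x a) by apply Rpower_pos.
  apply Rmult_le_reg_r with ((x + a) / exp (a * ln (x + a))). apply Rdiv_lt_0_compat; lra.
  eapply Rle_trans; [| exact H].
  replace (x / (x + a) * (Gamma x * Rpower x a) * ((x + a) / exp (a * ln (x + a))))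
    with (x * Gamma x * (Rpower x a / exp (a * ln (x + a)))) by (field; lra).
  rewrite <- (Rmult_1_r (x * Gamma x)) at 2. apply Rmult_le_compat_l. nra.
  apply Rmult_le_reg_r with (exp (a * ln (x + a))). lra.
  unfold Rdiv. rewrite Rmult_assoc, Rinv_l, Rmult_1_r by lra. lra.
Qed.

Lemma rho_bounds a x : 0 <= a <= 1 -> 0 < x -> x / (x + a) <= rho a x <= 1.
Proof.
  intros Ha Hx. pose proof (Gamma_pos x Hx). pose proof (Rpower_pos x a).
  assert (HP : 0 < Gamma x * Rpower x a) by (apply Rmult_lt_0_compat; auto).
  unfold rho. split.
  - apply Rmult_le_reg_r with (Gamma x * Rpower x a). auto.
    unfold Rdiv at 2. rewrite Rmult_assoc, Rinv_l, Rmult_1_r by lra. apply Gamma_lower; auto.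
  - apply Rmult_le_reg_r with (Gamma x * Rpower x a). auto.
    unfold Rdiv. rewrite Rmult_assoc, Rinv_l, Rmult_1_r, Rmult_1_l by lra. apply Gamma_upper; auto.
Qed.

Lemma rho_succ s x : 0 <= s -> 0 < x -> rho (s + 1) x = rho s x * ((x + s) / x).
Proof.
  intros Hs Hx. unfold rho. replace (x + (s + 1)) with (x + s + 1) by ring.
  rewrite Gamma_succ by lra. rewrite Rpower_plus, Rpower_1 by lra.
  pose proof (Gamma_pos x Hx). pose proof (Rpower_pos x s). field. repeat split; lra.
Qed.


Lemma lim_eq u (a b : R) : is_lim_seq u a -> a = b -> is_lim_seq u b.
Proof. intros H ->. exact H. Qed.

Section Lims.
Variable u : nat -> R.
Hypothesis Hu1 : forall n, 1 <= u n.
Hypothesis Hui : is_lim_seq u p_infty.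

Lemma lim_inv_u : is_lim_seq (fun n => / u n) 0.
Proof.
  pose proof (is_lim_seq_inv u p_infty Hui ltac:(discriminate)) as H. simpl in H. exact H.
Qed.

Lemma lim_ratio c : is_lim_seq (fun n => (u n + c) / u n) 1.
Proof.
  apply is_lim_seq_ext with (fun n => 1 + c * / u n).
  intros n. pose proof (Hu1 n). field. lra.
  apply lim_eq with (1 + c * 0). apply is_lim_seq_plus'. apply is_lim_seq_const.
  apply is_lim_seq_mult'. apply is_lim_seq_const. apply lim_inv_u. ring.
Qed.

Lemma lim_ratio_inv c : 0 <= c -> is_lim_seq (fun n => u n / (u n + c)) 1.
Proof.
  intros Hc. apply is_lim_seq_ext with (fun n => / ((u n + c) / u n)).
  intros n. pose proof (Hu1 n). field. lra.
  pose proof (is_lim_seq_inv _ 1 (lim_ratio c)) as H. simpl in H.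
  rewrite Rinv_1 in H. apply H. intro E. injection E. lra.
Qed.

Lemma rho_lim01 a : 0 <= a <= 1 -> is_lim_seq (fun n => rho a (u n)) 1.
Proof.
  intros Ha. apply is_lim_seq_le_le with (fun n => u n / (u n + a)) (fun _ => 1).
  intros n. apply rho_bounds; auto. pose proof (Hu1 n); lra.
  apply lim_ratio_inv; lra. apply is_lim_seq_const.
Qed.

Lemma rho_lim_k k : forall s, 0 <= s <= INR k -> is_lim_seq (fun n => rho s (u n)) 1.
Proof.
  induction k; intros s Hs.
  - simpl in Hs. apply rho_lim01. lra.
  - destruct (Rle_dec s 1). apply rho_lim01; lra.
    rewrite S_INR in Hs.
    apply is_lim_seq_ext with (fun n => rho (s - 1) (u n) * ((u n + (s - 1)) / u n)).
    intros m. rewrite <- rho_succ. f_equal. ring. lra. pose proof (Hu1 m); lra.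
    apply lim_eq with (1 * 1). apply is_lim_seq_mult'. apply IHk. lra. apply lim_ratio. ring.
Qed.

Lemma rho_lim s : 0 <= s -> is_lim_seq (fun n => rho s (u n)) 1.
Proof.
  intros Hs. destruct (INR_unbounded s) as [k Hk]. apply (rho_lim_k k). lra.
Qed.
End Lims.


Definition Qs (s : R) (N : nat) : R :=
  binom (2 * N) N * (Gamma (INR N + s + 1) ^ 2 / Gamma (2 * INR N + 2 * s + 1)).

Lemma lin_infty a : 1 <= a -> is_lim_seq (fun n => a * INR n + 1) p_infty.
Proof.
  intros Ha. apply is_lim_seq_spec. intros M. destruct (INR_unbounded M) as [N HN].
  exists N. intros n Hn. apply le_INR in Hn. pose proof (pos_INR N). nra.
Qed.

Lemma binom_mid N : binom (2 * N) N = INR (fact (2 * N)) / (INR (fact N) ^ 2).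
Proof.
  unfold binom, Binomial.C. replace (2 * N - N)%nat with N by lia. simpl. field.
  apply Rgt_not_eq, lt_0_INR, lt_O_fact.
Qed.

Lemma Rpower_cont_1 c : continuity_pt (fun b => Rpower b c) 1.
Proof.
  apply continuity_pt_filterlim. apply (ex_derive_continuous (fun b => Rpower b c)).
  unfold Rpower. auto_derive. lra.
Qed.

Lemma Qs_lim s : 0 <= s -> is_lim_seq (Qs s) (/ Rpower 4 s).
Proof.
  intros Hs.
  set (u1 := fun n : nat => 1 * INR n + 1). set (u2 := fun n : nat => 2 * INR n + 1).
  assert (Hu1 : forall n, 1 <= u1 n) by (intros; unfold u1; pose proof (pos_INR n); lra).
  assert (Hu2 : forall n, 1 <= u2 n) by (intros; unfold u2; pose proof (pos_INR n); lra).
  assert (L1 := rho_lim u1 Hu1 (lin_infty 1 ltac:(lra)) s Hs).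
  assert (L2 := rho_lim u2 Hu2 (lin_infty 2 ltac:(lra)) (2 * s) ltac:(lra)).
  set (v := fun n : nat => (2 * INR n + 2) / (2 * INR n + 1)).
  assert (L3 : is_lim_seq (fun n => Rpower (v n) (2 * s)) 1).
  { apply lim_eq with (Rpower 1 (2 * s)).
    apply (is_lim_seq_continuous (fun b => Rpower b (2 * s))). apply Rpower_cont_1.
    apply is_lim_seq_ext with (fun n => (u2 n + 1) / u2 n). intros n; unfold u2, v; f_equal; ring.
    apply lim_ratio; auto. apply lin_infty; lra.
    unfold Rpower; rewrite ln_1, Rmult_0_r, exp_0; auto. }
  assert (Hr : forall n, 0 < rho (2 * s) (u2 n)).
  { intros n. unfold rho. pose proof (Hu2 n). apply Rdiv_lt_0_compat. apply Gamma_pos; lra.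
    apply Rmult_lt_0_compat. apply Gamma_pos; lra. apply Rpower_pos. }
  apply is_lim_seq_ext with (fun n => (rho s (u1 n) ^ 2 * / rho (2 * s) (u2 n)) * Rpower (v n) (2 * s) * / Rpower 4 s).
  - intros n. unfold Qs. rewrite binom_mid.
    pose proof (pos_INR n).
    assert (E1 : Gamma (INR n + s + 1) = rho s (u1 n) * INR (fact n) * Rpower (INR n + 1) s).
    { unfold rho, u1. rewrite <- Gamma_nat. replace (1 * INR n + 1 + s) with (INR n + s + 1) by ring.
      replace (1 * INR n + 1) with (INR n + 1) by ring. field. split. apply Rgt_not_eq, Rpower_pos.
      apply Rgt_not_eq, Gamma_pos; lra. }
    assert (E2 : Gamma (2 * INR n + 2 * s + 1) = rho (2 * s) (u2 n) * INR (fact (2 * n)) * Rpower (2 * INR n + 1) (2 * s)).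
    { unfold rho, u2. replace (2 * INR n) with (INR (2 * n)) at 3 4 by (rewrite mult_INR; simpl; ring).
      rewrite <- Gamma_nat. rewrite mult_INR. simpl INR. replace (1 + 1) with 2 by ring.
      replace (2 * INR n + 1 + 2 * s) with (2 * INR n + 2 * s + 1) by ring. field. split. apply Rgt_not_eq, Rpower_pos.
      apply Rgt_not_eq, Gamma_pos; lra. }
    rewrite E1, E2.
    assert (Ev : Rpower (v n) (2 * s) * / Rpower 4 s = Rpower (INR n + 1) s ^ 2 / Rpower (2 * INR n + 1) (2 * s)).
    { unfold v, Rpower. rewrite ln_div by lra. replace (2 * INR n + 2) with (2 * (INR n + 1)) by ring.
      rewrite ln_mult by lra. replace 4 with (2 * 2) by ring. rewrite ln_mult by lra.
      rewrite <- exp_Ropp. simpl. rewrite Rmult_1_r. rewrite <- !exp_plus.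
      unfold Rdiv. rewrite <- exp_Ropp, <- exp_plus. f_equal. ring. }
    rewrite Rmult_assoc, Ev.
    pose proof (lt_0_INR _ (lt_O_fact n)). pose proof (lt_0_INR _ (lt_O_fact (2 * n))).
    pose proof (Rpower_pos (INR n + 1) s). pose proof (Rpower_pos (2 * INR n + 1) (2 * s)).
    pose proof (Hr n). field. repeat split; lra.
  - assert (La : is_lim_seq (fun n => rho s (u1 n) ^ 2) 1).
    { apply is_lim_seq_ext with (fun n => rho s (u1 n) * rho s (u1 n)). intros; ring.
      apply lim_eq with (1 * 1). apply is_lim_seq_mult'; exact L1. ring. }
    assert (Lb : is_lim_seq (fun n => / rho (2 * s) (u2 n)) 1).
    { pose proof (is_lim_seq_inv _ 1 L2) as H. simpl in H. rewrite Rinv_1 in H. apply H. intro E; injection E; lra. }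
    apply lim_eq with (1 * 1 * 1 * / Rpower 4 s).
    apply is_lim_seq_mult'. apply is_lim_seq_mult'. apply is_lim_seq_mult'. exact La. exact Lb. exact L3.
    apply is_lim_seq_const. ring.
Qed.


Lemma poch_shift a k : poch (a + 1) k * a = poch a k * (a + INR k).
Proof.
  induction k. simpl. ring.
  rewrite !poch_S, S_INR.
  replace (poch (a + 1) k * (a + 1 + INR k) * a) with (poch (a + 1) k * a * (a + 1 + INR k)) by ring.
  rewrite IHk. ring.
Qed.

Lemma telesc (D H H' : nat -> R) m :
  (forall k, (k <= m)%nat -> D k = H' k - H k) ->
  (forall k, (k < m)%nat -> H' k = H (S k)) ->
  sum_f_R0 D m = H' m - H 0%nat.
Proof.
  intros HD HH.
  assert (forall j, (j <= m)%nat -> sum_f_R0 D j = H' j - H 0%nat).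
  { induction j; intros Hj. simpl. apply HD; lia.
    simpl. rewrite IHj by lia. rewrite HD by lia. rewrite HH by lia. ring. }
  apply H0; lia.
Qed.

Lemma core1 (b f Pr P1 P2 sg K M x r : R) :
  0 < Pr -> 0 < P1 -> 0 < P2 -> 0 <= K -> 0 <= M -> 0 <= x -> 0 < r -> f <> 0 ->
  let s := M + r in
  let c := b * (sg / (2 * K + 1)) * (f / (Pr * (r + K))) in
  c * (P1 / P2) - (2 * x + 1) * (x + s + 1) / ((x + 1) * (2 * x + 2 * s + 1)) *
     (c * ((P1 * (x + s + 1 + K) / (x + s + 1)) / (P2 * (x + 1 + K) / (x + 1))))
  = (b * (M - K) / (K + 1)) * sg * ((K + 1) * f) * (P1 * (x + s + 1 + K)) /
      ((Pr * (r + K)) * (P2 * (x + 1 + K)) * (x + M + 1) * (2 * x + 2 * s + 1))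
    - - (b * sg * f * P1 / (Pr * P2 * (x + M + 1) * (2 * x + 2 * s + 1))).
Proof.
  intros. subst s c. field. repeat split; lra.
Qed.

Lemma core2 (b sg P Pr1 K M r : R) :
  0 < Pr1 -> 0 < P -> 0 <= K -> K <= M -> 0 < r ->
  let KK := (2 * M + r + 2) / ((2 * M + 3) * (M + r + 1)) in
  b * (M + 1) / (M + 1 - K) * (sg / (2 * K + 1)) * (P / Pr1)
  - (2 * r + 2 * M + 1) * (M + 1) / ((2 * M + 3) * (r + M + 1)) *
    (b * (sg / (2 * K + 1)) * ((P * (M + r + 1) / (M + r + 1 + K)) / Pr1))
  = sg * b * P / Pr1 * KK - - sg * b * K / (M - K + 1) * P / (M + r + 1 + K) * (r + K) / Pr1 * KK.
Proof.
  intros. subst KK. field. repeat split; lra.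
Qed.


Lemma poch_next a k : 0 < a -> poch (a + 1) k = poch a k * (a + INR k) / a.
Proof. intros Ha. rewrite <- poch_shift. field. lra. Qed.

Lemma poch_prev a k : 0 < a -> poch a k = poch (a + 1) k * a / (a + INR k).
Proof. intros Ha. pose proof (pos_INR k). rewrite poch_shift. field. lra. Qed.

Lemma fact_pos k : 0 < INR (fact k).
Proof. apply lt_0_INR, lt_O_fact. Qed.

Lemma binom_succ m k : (k < m)%nat -> binom m (S k) = binom m k * (INR m - INR k) / (INR k + 1).
Proof.
  intros Hk. unfold binom, Binomial.C.
  replace (m - k)%nat with (S (m - S k)) by lia.
  rewrite !fact_simpl, !mult_INR, !S_INR.
  rewrite minus_INR by lia. rewrite S_INR.
  pose proof (fact_pos k). pose proof (fact_pos (m - S k)). pose proof (pos_INR k).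
  field. repeat split; try lra.
  assert (INR (S k) <= INR m) by (apply le_INR; lia). rewrite S_INR in H2. lra.
Qed.

Lemma binom_Sm m k : (k <= m)%nat -> binom (S m) k = binom m k * (INR m + 1) / (INR m + 1 - INR k).
Proof.
  intros Hk. unfold binom, Binomial.C.
  replace (S m - k)%nat with (S (m - k)) by lia.
  rewrite !fact_simpl, !mult_INR, !S_INR.
  rewrite minus_INR by lia.
  pose proof (fact_pos k). pose proof (fact_pos (m - k)). pose proof (fact_pos m).
  assert (INR k <= INR m) by (apply le_INR; lia).
  field. repeat split; lra.
Qed.

Lemma binom_nn m : binom m m = 1.
Proof. unfold binom, Binomial.C. rewrite Nat.sub_diag. simpl. field. pose proof (fact_pos m). lra. Qed.

Lemma binom_n0 m : binom m 0 = 1.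
Proof. unfold binom, Binomial.C. rewrite Nat.sub_0_r. simpl. field. pose proof (fact_pos m). lra. Qed.

Section I1.
Variables (m : nat) (r : R).
Hypothesis Hr : 0 < r.

Definition sM := INR m + r.
Definition cf (k : nat) : R := binom m k * ((-1) ^ k / (2 * INR k + 1)) * (INR (fact k) / poch r (k + 1)).
Definition wN (k N : nat) : R := poch (INR N + sM + 1) k / poch (INR N + 1) k.
Definition Rm (N : nat) : R := sum_f_R0 (fun k => cf k * wN k N) m.
Definition rhoN (N : nat) : R :=
  (2 * INR N + 1) * (INR N + sM + 1) / ((INR N + 1) * (2 * INR N + 2 * sM + 1)).

Lemma sum_lin (u v : nat -> R) c n : sum_f_R0 u n - c * sum_f_R0 v n = sum_f_R0 (fun k => u k - c * v k) n.
Proof. induction n; simpl; [ring|]. rewrite <- IHn. ring. Qed.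

Lemma I1_identity N : Rm N - rhoN N * Rm (S N) = 1 / ((INR N + INR m + 1) * (2 * INR N + 2 * sM + 1)).
Proof.
  pose proof (pos_INR N) as HN. pose proof (pos_INR m) as Hm.
  assert (Hs : 0 < sM) by (unfold sM; lra).
  set (x := INR N). set (M := INR m).
  set (Hf := fun k : nat => - (binom m k * (-1) ^ k * INR (fact k) * poch (x + sM + 1) k /
            (poch r k * poch (x + 1) k * (x + M + 1) * (2 * x + 2 * sM + 1)))).
  set (Hf' := fun k : nat => (binom m k * (M - INR k) / (INR k + 1)) * (-1) ^ k * ((INR k + 1) * INR (fact k)) *
            (poch (x + sM + 1) k * (x + sM + 1 + INR k)) /
            ((poch r k * (r + INR k)) * (poch (x + 1) k * (x + 1 + INR k)) * (x + M + 1) * (2 * x + 2 * sM + 1))).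
  assert (Hx : 0 <= x) by (unfold x; lra).
  assert (HM : 0 <= M) by (unfold M; lra).
  unfold Rm. rewrite sum_lin.
  rewrite (telesc _ Hf Hf' m).
  - assert (E : Hf' m = 0) by (unfold Hf'; replace (M - INR m) with 0 by (unfold M; ring); unfold Rdiv; ring).
    rewrite E. unfold Hf. simpl. rewrite binom_n0. unfold x, M. field. split; lra.
  - intros k Hk. pose proof (pos_INR k).
    assert (Pr : 0 < poch r k) by (apply poch_pos; lra).
    assert (P1 : 0 < poch (x + sM + 1) k) by (apply poch_pos; lra).
    assert (P2 : 0 < poch (x + 1) k) by (apply poch_pos; lra).
    unfold cf, wN, Hf, Hf', rhoN. rewrite Nat.add_1_r, poch_S. rewrite S_INR. fold x.
    replace (x + 1 + sM + 1) with (x + sM + 1 + 1) by ring.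
    rewrite (poch_next (x + sM + 1)) by lra. rewrite (poch_next (x + 1)) by lra.
    unfold sM in *. unfold M. pose proof (fact_pos k). field. repeat split; lra.
  - intros k Hk. pose proof (pos_INR k).
    assert (Pr : 0 < poch r k) by (apply poch_pos; lra).
    assert (P1 : 0 < poch (x + sM + 1) k) by (apply poch_pos; lra).
    assert (P2 : 0 < poch (x + 1) k) by (apply poch_pos; lra).
    unfold Hf, Hf'. rewrite binom_succ by auto. rewrite fact_simpl, mult_INR, !poch_S, !S_INR. simpl pow.
    fold M. pose proof (fact_pos k). field. repeat split; lra.
Qed.
End I1.


Section I2.
Variable r : R.
Hypothesis Hr : 0 < r.

Definition am (m k : nat) : R :=
  binom m k * ((-1) ^ k / (2 * INR k + 1)) * (poch (INR m + r + 1) k / poch r (k + 1)).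
Definition fm (m : nat) : R := sum_f_R0 (am m) m.

Lemma f_rec m : fm (S m) = (2 * r + 2 * INR m + 1) * (INR m + 1) / ((2 * INR m + 3) * (r + INR m + 1)) * fm m.
Proof.
  pose proof (pos_INR m) as Hm. set (M := INR m) in *.
  set (KK := (2 * M + r + 2) / ((2 * M + 3) * (M + r + 1))).
  set (c := (2 * r + 2 * M + 1) * (M + 1) / ((2 * M + 3) * (r + M + 1))).
  set (h := fun k : nat => (-1) ^ k * binom m k * poch (M + r + 1 + 1) k / poch r (k + 1) * KK).
  set (hm1 := fun k : nat => - (-1) ^ k * binom m k * INR k / (M - INR k + 1) * poch (M + r + 1 + 1) k /
                    (M + r + 1 + INR k) * (r + INR k) / poch r (k + 1) * KK).
  assert (T : sum_f_R0 (am (S m)) m - c * fm m = h m - hm1 0%nat).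
  { unfold fm. rewrite sum_lin. apply telesc.
    - intros k Hk. pose proof (pos_INR k). assert (INR k <= M) by (apply le_INR in Hk; auto).
      assert (Pr1 : 0 < poch r (k + 1)) by (apply poch_pos; lra).
      assert (P : 0 < poch (M + r + 1 + 1) k) by (apply poch_pos; lra).
      unfold am, h, hm1, c, KK. rewrite binom_Sm by auto. rewrite S_INR. fold M.
      replace (M + 1 + r + 1) with (M + r + 1 + 1) by ring.
      rewrite (poch_prev (M + r + 1) k) by lra.
      field. repeat split; lra.
    - intros k Hk. pose proof (pos_INR k). assert (INR k + 1 <= M) by (apply le_INR in Hk; rewrite S_INR in Hk; auto).
      assert (Pr1 : 0 < poch r (k + 1)) by (apply poch_pos; lra).
      assert (P : 0 < poch (M + r + 1 + 1) k) by (apply poch_pos; lra).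
      unfold h, hm1. rewrite binom_succ by auto. fold M.
      replace (S k + 1)%nat with (S (k + 1)) by lia. rewrite (poch_S r (k + 1)). rewrite poch_S.
      rewrite plus_INR, S_INR. simpl pow. simpl INR. field. repeat split; lra. }
  assert (E0 : hm1 0%nat = 0) by (unfold hm1; simpl; unfold Rdiv; ring).
  assert (Elast : am (S m) (S m) = - h m).
  { unfold am, h, KK. rewrite binom_nn, binom_nn. rewrite S_INR. fold M.
    replace (S m + 1)%nat with (S (m + 1)) by lia. rewrite (poch_S r (m + 1)).
    rewrite (poch_S _ m). rewrite plus_INR. simpl INR. simpl pow. fold M.
    replace (M + 1 + r + 1) with (M + r + 1 + 1) by ring.
    assert (Pr1 : 0 < poch r (m + 1)) by (apply poch_pos; lra).
    assert (P : 0 < poch (M + r + 1 + 1) m) by (apply poch_pos; lra).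
    field. repeat split; lra. }
  unfold fm at 1. simpl sum_f_R0. rewrite Elast. fold c. rewrite E0 in T. lra.
Qed.

Lemma binom_mid_S m : binom (2 * S m) (S m) = binom (2 * m) m * (2 * INR m + 1) * (2 * INR m + 2) / (INR m + 1) ^ 2.
Proof.
  rewrite !binom_mid. replace (2 * S m)%nat with (S (S (2 * m))) by lia.
  rewrite !fact_simpl, !mult_INR, !S_INR. rewrite mult_INR. simpl INR.
  pose proof (fact_pos m). pose proof (fact_pos (2 * m)). pose proof (pos_INR m). field. split; lra.
Qed.

Lemma fm_closed m : fm m * poch r (m + 1) ^ 2 / poch (2 * r) (2 * m + 1) = 1 / (2 * (2 * INR m + 1) * binom (2 * m) m).
Proof.
  induction m.
  - unfold fm, am. simpl. rewrite binom_n0. unfold binom, Binomial.C. simpl. field. lra.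
  - rewrite f_rec.
    pose proof (pos_INR m) as Hm.
    assert (Pr : 0 < poch r (m + 1)) by (apply poch_pos; lra).
    assert (P2 : 0 < poch (2 * r) (2 * m + 1)) by (apply poch_pos; lra).
    assert (Hb : 0 < binom (2 * m) m).
    { rewrite binom_mid. apply Rdiv_lt_0_compat. apply fact_pos. apply pow_lt, fact_pos. }
    replace (S m + 1)%nat with (S (m + 1)) by lia. rewrite (poch_S r (m + 1)).
    replace (2 * S m + 1)%nat with (S (S (2 * m + 1))) by lia. rewrite !poch_S.
    rewrite binom_mid_S. rewrite !S_INR, !plus_INR, !mult_INR. simpl INR.
    replace (fm m) with (1 / (2 * (2 * INR m + 1) * binom (2 * m) m) * poch (2 * r) (2 * m + 1) / poch r (m + 1) ^ 2).
    2:{ rewrite <- IHm. field. lra. }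
    field. repeat split; lra.
Qed.
End I2.


Lemma lin_infty_c c : 1 <= c -> is_lim_seq (fun n => INR n + c) p_infty.
Proof.
  intros Hc. apply is_lim_seq_spec. intros M. destruct (INR_unbounded M) as [N HN].
  exists N. intros n Hn. apply le_INR in Hn. lra.
Qed.

Lemma wN_lim m r k : 0 < r -> is_lim_seq (fun N => wN m r k N) 1.
Proof.
  intros Hr. pose proof (pos_INR m). assert (Hs : 0 < sM m r) by (unfold sM; lra).
  induction k.
  - apply is_lim_seq_ext with (fun _ => 1). intros; unfold wN; simpl; field. apply is_lim_seq_const.
  - apply is_lim_seq_ext with (fun N => wN m r k N * ((INR N + (1 + INR k) + sM m r) / (INR N + (1 + INR k)))).
    + intros N. unfold wN. rewrite !poch_S. pose proof (pos_INR N). pose proof (pos_INR k).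
      assert (0 < poch (INR N + 1) k) by (apply poch_pos; lra).
      assert (0 < poch (INR N + sM m r + 1) k) by (apply poch_pos; lra).
      field. lra.
    + apply lim_eq with (1 * 1). apply is_lim_seq_mult'. exact IHk.
      apply (lim_ratio (fun N => INR N + (1 + INR k))).
      intros N; pose proof (pos_INR N); pose proof (pos_INR k); lra.
      apply lin_infty_c. pose proof (pos_INR k); lra. ring.
Qed.

Lemma lim_sum (c : nat -> R) (w : nat -> nat -> R) m :
  (forall k, is_lim_seq (w k) 1) ->
  is_lim_seq (fun N => sum_f_R0 (fun k => c k * w k N) m) (sum_f_R0 c m).
Proof.
  intros Hw. induction m; simpl.
  - apply lim_eq with (c 0%nat * 1). apply is_lim_seq_mult'. apply is_lim_seq_const. apply Hw. ring.
  - apply lim_eq with (sum_f_R0 c m + c (S m) * 1). apply is_lim_seq_plus'. exact IHm.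
    apply is_lim_seq_mult'. apply is_lim_seq_const. apply Hw. ring.
Qed.

Theorem theorem5p0p1 (m : nat) (r : R) (hr : 0 < r) :
  is_series
    (fun n : nat =>
       1 / ((INR n + INR m + 1) * (2 * INR n + 2 * INR m + 2 * r + 1))
       * (binom (2 * n) n
          / binomG (2 * INR n + 2 * INR m + 2 * r) (INR n + INR m + r)))
    (1 / (2 * (2 * INR m + 1) * binom (2 * m) m)
       * (Gamma r ^ 2 / Gamma (2 * r))
     - 1 / Rpower 4 (INR m + r)
       * sum_f_R0
           (fun k : nat =>
              binom m k * ((-1) ^ k / (2 * INR k + 1))
              * (INR (fact k) / poch r (k + 1)))
           m).
Proof.
  pose proof (pos_INR m) as Hm.
  set (s := INR m + r).
  assert (Hs : 0 < s) by (unfold s; lra).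
  set (z := fun N => Rm m r N * Qs s N).
  set (term := fun n : nat =>
       1 / ((INR n + INR m + 1) * (2 * INR n + 2 * INR m + 2 * r + 1))
       * (binom (2 * n) n
          / binomG (2 * INR n + 2 * INR m + 2 * r) (INR n + INR m + r))).
  assert (Hterm : forall n, term n = Qs s n / ((INR n + INR m + 1) * (2 * INR n + 2 * s + 1))).
  { intros n. pose proof (pos_INR n). unfold term, binomG, Qs.
    replace (2 * INR n + 2 * INR m + 2 * r + 1) with (2 * INR n + 2 * s + 1) by (unfold s; ring).
    replace (INR n + INR m + r + 1) with (INR n + s + 1) by (unfold s; ring).
    replace (2 * INR n + 2 * INR m + 2 * r - (INR n + INR m + r) + 1) with (INR n + s + 1) by (unfold s; ring).
    pose proof (Gamma_pos (INR n + s + 1) ltac:(lra)). pose proof (Gamma_pos (2 * INR n + 2 * s + 1) ltac:(lra)).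
    field. repeat split; lra. }
  assert (HQ : forall n, Qs s (S n) = rhoN m r n * Qs s n).
  { intros n. pose proof (pos_INR n). unfold Qs, rhoN, sM. fold s.
    replace (2 * S n)%nat with (2 * S n)%nat by reflexivity.
    rewrite binom_mid_S. rewrite S_INR.
    replace (INR n + 1 + s + 1) with ((INR n + s + 1) + 1) by ring.
    replace (2 * (INR n + 1) + 2 * s + 1) with ((2 * INR n + 2 * s + 1) + 1 + 1) by ring.
    rewrite (Gamma_succ (INR n + s + 1)) by lra.
    rewrite (Gamma_succ (2 * INR n + 2 * s + 1 + 1)) by lra.
    rewrite (Gamma_succ (2 * INR n + 2 * s + 1)) by lra.
    pose proof (Gamma_pos (INR n + s + 1) ltac:(lra)). pose proof (Gamma_pos (2 * INR n + 2 * s + 1) ltac:(lra)).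
    field. repeat split; lra. }
  assert (Htel : forall n, term n = z n - z (S n)).
  { intros n. unfold z. rewrite HQ, Hterm.
    replace (Rm m r n * Qs s n - Rm m r (S n) * (rhoN m r n * Qs s n))
      with (Qs s n * (Rm m r n - rhoN m r n * Rm m r (S n))) by ring.
    rewrite I1_identity by auto. unfold sM. fold s. field. pose proof (pos_INR n). split; lra. }
  assert (Hsum : forall N, sum_n term N = z 0%nat - z (S N)).
  { intros N. rewrite sum_n_Reals. induction N; simpl. apply Htel. rewrite IHN, Htel. ring. }
  assert (Hz0 : z 0%nat = 1 / (2 * (2 * INR m + 1) * binom (2 * m) m) * (Gamma r ^ 2 / Gamma (2 * r))).
  { unfold z, Qs. simpl INR. rewrite binom_n0.
    replace (Rm m r 0) with (fm r m).
    2:{ unfold Rm, fm. apply sum_eq. intros k Hk. unfold cf, wN, am, sM. simpl INR.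
        rewrite Rplus_0_l, Rplus_0_l, poch_1_fact.
        pose proof (fact_pos k). assert (0 < poch r (k + 1)) by (apply poch_pos; lra).
        pose proof (pos_INR k). field. repeat split; lra. }
    replace (0 + s + 1) with (r + INR (m + 1)) by (unfold s; rewrite plus_INR; simpl; ring).
    replace (2 * 0 + 2 * s + 1) with (2 * r + INR (2 * m + 1)) by (unfold s; rewrite plus_INR, mult_INR; simpl; ring).
    rewrite !Gamma_shift by lra.
    pose proof (fm_closed r hr m) as HF.
    pose proof (Gamma_pos r hr). pose proof (Gamma_pos (2 * r) ltac:(lra)).
    assert (0 < poch r (m + 1)) by (apply poch_pos; lra).
    assert (0 < poch (2 * r) (2 * m + 1)) by (apply poch_pos; lra).
    rewrite <- HF. field. repeat split; lra. }
  set (F := sum_f_R0 (fun k : nat => binom m k * ((-1) ^ k / (2 * INR k + 1)) * (INR (fact k) / poch r (k + 1))) m).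
  assert (HzL : is_lim_seq (fun N => z (S N)) (F * / Rpower 4 s)).
  { unfold z. apply is_lim_seq_mult'.
    - apply (lim_sum (cf m r) (fun k N => wN m r k (S N)) m).
      intros k. apply (is_lim_seq_incr_1 (fun N => wN m r k N)). apply wN_lim; auto.
    - apply (is_lim_seq_incr_1 (Qs s)). apply Qs_lim. lra. }
  unfold is_series.
  assert (HL : is_lim_seq (sum_n term) (z 0%nat - F * / Rpower 4 s)).
  { apply is_lim_seq_ext with (fun N => z 0%nat - z (S N)). intros; rewrite Hsum; auto.
    apply is_lim_seq_minus'. apply is_lim_seq_const. exact HzL. }
  rewrite Hz0 in HL.
  replace (1 / (2 * (2 * INR m + 1) * binom (2 * m) m) * (Gamma r ^ 2 / Gamma (2 * r)) -
     1 / Rpower 4 s * F)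
    with (1 / (2 * (2 * INR m + 1) * binom (2 * m) m) * (Gamma r ^ 2 / Gamma (2 * r)) -
     F * / Rpower 4 s) by (unfold Rdiv; ring).
  exact HL.
Qed.
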